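(* Let $K\ge 1$ and $N_1,\ldots,N_K\ge 1$ be integers, let $T\ge 1$, and let $\Delta_N=\{\boldsymbol u\in\mathbb R_+^N:\sum_{i=1}^N u_i=1\}$. Let $\ell_t:\Delta_{N_1}\times\cdots\times\Delta_{N_K}\to\mathbb R$, $t\ge 1$, be differentiable and jointly convex loss functions. Assume that for every $k\in\{1,\ldots,K\}$ there is $G^{(k)}>0$ with $$\max_{1\le t\le T}\ \sup_{\boldsymbol u^{(1)},\ldots,\boldsymbol u^{(K)}}\ \max_{1\le i\le N_k}\Big|\partial_{u^{(k)}_i}\ell_t\big(\boldsymbol u^{(1)},\ldots,\boldsymbol u^{(K)}\big)\Big|\le G^{(k)}.$$ Then the Multi-variable Exponentiated Gradient algorithm (described in the context) run with $\eta^{(k)}=\sqrt{2\log(N_k)/T}\,/G^{(k)}$ for $k=1,\ldots,K$ satisfies $$\sum_{t=1}^T \ell_t\big(\hat{\boldsymbol u}^{(1)}_t,\ldots,\hat{\boldsymbol u}^{(K)}_t\big)-\min_{(\boldsymbol u^{(1)},\ldots,\boldsymbol u^{(K)})\in\Delta_{N_1}\times\cdots\times\Delta_{N_K}}\sum_{t=1}^T\ell_t\big(\boldsymbol u^{(1)},\ldots,\boldsymbol u^{(K)}\big)\le\sqrt{2T}\sum_{k=1}^K G^{(k)}\sqrt{\log N_k}.$$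
   Context: Multi-variable Exponentiated Gradient algorithm with parameters $\eta^{(1)},\ldots,\eta^{(K)}>0$ (the losses may be chosen adversarially, $\ell_t$ being revealed after the output of round $t$): initialize $\hat{\boldsymbol u}^{(k)}_1=(1/N_k,\ldots,1/N_k)\in\Delta_{N_k}$ for all $k$. At each round $t=1,2,\ldots$, output $(\hat{\boldsymbol u}^{(1)}_t,\ldots,\hat{\boldsymbol u}^{(K)}_t)$, observe $\ell_t$, and set for each $k$ and $i\in\{1,\ldots,N_k\}$ $$\hat u^{(k)}_{t+1,i}=\frac{\exp\big(-\eta^{(k)}\sum_{s=1}^t\partial_{u^{(k)}_i}\ell_s(\hat{\boldsymbol u}^{(1)}_s,\ldots,\hat{\boldsymbol u}^{(K)}_s)\big)}{\sum_{i'=1}^{N_k}\exp\big(-\eta^{(k)}\sum_{s=1}^t\partial_{u^{(k)}_{i'}}\ell_s(\hat{\boldsymbol u}^{(1)}_s,\ldots,\hat{\boldsymbol u}^{(K)}_s)\big)},$$ where $\partial_{u^{(k)}_i}\ell_s$ is the partial derivative of $\ell_s$ with respect to the $i$-th coordinate of the $k$-th block variable. *)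

(* Defs.v *)
From HB Require Import structures.
From mathcomp Require Import all_boot all_order all_algebra.
From mathcomp Require Import all_classical all_reals all_analysis.
Set Implicit Arguments. Unset Strict Implicit. Unset Printing Implicit Defensive.
Import Order.TTheory GRing.Theory Num.Theory.
Import numFieldNormedType.Exports.
Local Open Scope ring_scope.

(* A point (u^(1),...,u^(K)) of R^{N_1} x ... x R^{N_K} is represented as a
   single row vector of length N_1 + ... + N_K; the i-th coordinate of the
   k-th block is the coordinate  idx k i  (MathComp's tagnat.Rank bijection
   between {k : 'I_K & 'I_(N k)} and 'I_(\sum_k N k)). *)
Definition dimN (K : nat) (N : 'I_K -> nat) : nat := (\sum_(k < K) N k)%N.

Definition idx (K : nat) (N : 'I_K -> nat) (k : 'I_K) (i : 'I_(N k))
  : 'I_(dimN N) := @tagnat.Rank K N k i.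

Definition in_simplex_prod (R : realType) (K : nat) (N : 'I_K -> nat)
  (x : 'rV[R]_(dimN N)) : Prop :=
  forall k : 'I_K, (forall i : 'I_(N k), 0 <= x ord0 (idx i)) /\
                   \sum_(i < N k) x ord0 (idx i) = 1.

Definition partial (R : realType) (n : nat) (f : 'rV[R]_n -> R)
  (x : 'rV[R]_n) (j : 'I_n) : R := 'D_(delta_mx ord0 j) f x.

Definition eg_weights (R : realType) (K : nat) (N : 'I_K -> nat)
  (eta : 'I_K -> R) (L : 'rV[R]_(dimN N)) : 'rV[R]_(dimN N) :=
  \row_(j < dimN N)
     (let k := @tagnat.sig1 K N j in
      expR (- eta k * L ord0 j) /
      \sum_(i < N k) expR (- eta k * L ord0 (idx i))).

Fixpoint cum_grad (R : realType) (K : nat) (N : 'I_K -> nat)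
  (eta : 'I_K -> R) (l : nat -> 'rV[R]_(dimN N) -> R) (t : nat)
  : 'rV[R]_(dimN N) :=
  match t with
  | 0 => 0
  | s.+1 => cum_grad eta l s +
            \row_(j < dimN N) partial (l s.+1) (eg_weights eta (cum_grad eta l s)) j
  end.

Definition eg_output (R : realType) (K : nat) (N : 'I_K -> nat)
  (eta : 'I_K -> R) (l : nat -> 'rV[R]_(dimN N) -> R) (t : nat)
  : 'rV[R]_(dimN N) := eg_weights eta (cum_grad eta l t.-1).

(* Main.v *)
Require Import Defs.
From HB Require Import structures.
From mathcomp Require Import all_boot all_order all_algebra.
From mathcomp Require Import all_classical all_reals all_analysis.
From mathcomp Require Import ring lra zify.
Import Order.TTheory GRing.Theory Num.Theory.
Import numFieldNormedType.Exports.
Local Open Scope ring_scope.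

Section Hoef.
Variable R : realType.
Variable p : R.
Hypothesis p01 : 0 <= p <= 1.

Let S := fun y : R => 1 - p + p * expR y.

Lemma S_gt0 (x : R) : 0 < S x.
Proof.
case/andP: p01 => p0 p1; have ex := expR_gt0 x; rewrite /S.
have [->|pp] := eqVneq p 0; first by rewrite mul0r addr0 subr0.
have : 0 < p by rewrite lt0r pp.
move=> pg; have := mulr_gt0 pg ex; lra.
Qed.

Lemma is_derive_S (x : R) : is_derive x 1 S (p * expR x).
Proof.
have -> : S = cst (1 - p) + p *: (expR : R -> R).
  by apply/funext => y /=.
have h1 := @is_deriveD R R R (cst (1-p)) (p *: expR) x 1 0 (p * expR x).
have h2 : is_derive x 1 (p *: (expR : R -> R)) (p * expR x).
  exact: is_deriveZ.
have h3 : is_derive x 1 (cst (1-p) + p *: (expR : R -> R)) (0 + p * expR x) by exact: h1.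
by rewrite add0r in h3.
Qed.

Let g : R -> R := (p *: (expR : R -> R)) * (fun y => (S y)^-1) - (4^-1 : R) *: (@id R).

Lemma is_derive_g (x : R) : is_derive x 1 g
  ((p * expR x) * (- (S x) ^- 2 * (p * expR x)) + (S x)^-1 * (p * expR x) - 4^-1).
Proof.
have hV := @is_deriveV R S x (p * expR x) 1 (lt0r_neq0 (S_gt0 x)) (is_derive_S x).
have hE : is_derive x 1 (p *: (expR : R -> R)) (p * expR x) by exact: is_deriveZ.
have hM := @is_deriveM R R _ _ x 1 _ _ hE hV.
have hI : is_derive x 1 ((4^-1 : R) *: (@id R)) (4^-1 * 1) by exact: is_deriveZ.
have := @is_deriveB R R R _ _ x 1 _ _ hM hI.
rewrite /g mulr1 => h; apply: is_derive_eq h _.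
by [].
Qed.


Lemma g_le (h : R) : 0 <= h -> g h <= p.
Proof.
move=> h0.
have dg x : derivable g x 1 by case: (is_derive_g x).
have Dg x : derive1 g x = ((p * expR x) * (- (S x) ^- 2 * (p * expR x)) + (S x)^-1 * (p * expR x) - 4^-1).
  by rewrite derive1E; case: (is_derive_g x).
have g0 : g 0 = p.
  change (p * expR 0 * (S 0)^-1 - 4^-1 * 0 = p).
  by rewrite /S expR0 mulr1 subrK invr1 !mulr1 mulr0 subr0.
rewrite -g0; apply: (@ler0_derive1_nincry R g 0) => //.
- move=> x _; rewrite Dg -exprVn.
  set q := (S x)^-1; set e := p * expR x.
  have -> : e * (- q ^+ 2 * e) + q * e - 4^-1 = - (e * q) ^+ 2 + e * q - 4^-1 by ring.
  set t := e * q.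
  have -> : - t ^+ 2 + t - 4^-1 = - (t - 2^-1) ^+ 2.
    by field.
  by rewrite oppr_le0 sqr_ge0.
- apply: derivable_within_continuous => x _; exact: dg.
Qed.


Let F : R -> R := ((@ln R) \o S) - p *: (@id R) - (8^-1 : R) *: ((@id R) ^+ 2).

Lemma is_derive_F (x : R) : is_derive x 1 F
  ((S x)^-1 * (p * expR x) - p * 1 - 8^-1 * (2%:R * x ^+ 1 * 1)).
Proof.
have hl := @is_derive1_ln R (S x) (S_gt0 x).
have hc := @is_derive1_comp R (@ln R) S x _ _ hl (is_derive_S x).
have hp : is_derive x 1 (p *: (@id R)) (p * 1) by exact: is_deriveZ.
have hX : is_derive x 1 ((@id R) ^+ 2) ((2%:R * x ^+ 1) *: 1) by exact: is_deriveX.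
have hq : is_derive x 1 ((8^-1 : R) *: ((@id R) ^+ 2)) (8^-1 * ((2%:R * x ^+ 1) *: 1)) by exact: is_deriveZ.
have h1 := @is_deriveB R R R _ _ x 1 _ _ hc hp.
have h2 := @is_deriveB R R R _ _ x 1 _ _ h1 hq.
exact: h2.
Qed.

Lemma F_le (h : R) : 0 <= h -> F h <= 0.
Proof.
move=> h0.
have dF x : derivable F x 1 by case: (is_derive_F x).
have DF x : derive1 F x = ((S x)^-1 * (p * expR x) - p * 1 - 8^-1 * (2%:R * x ^+ 1 * 1)).
  by rewrite derive1E; case: (is_derive_F x).
have F0 : F 0 = 0.
  change (ln (S 0) - p * 0 - 8^-1 * (0 ^+ 2) = 0).
  by rewrite /S expR0 mulr1 subrK ln1 expr0n /= !mulr0 !subr0.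
rewrite -F0; apply: (@ler0_derive1_nincry R F 0) => //.
- move=> x; rewrite in_itv /= andbT => x0; rewrite DF.
  have := g_le x (ltW x0).
  change (p * expR x * (S x)^-1 - 4^-1 * x <= p -> (S x)^-1 * (p * expR x) - p * 1 - 8^-1 * (2%:R * x ^+ 1 * 1) <= 0).
  have -> : 8^-1 * (2%:R * x ^+ 1 * 1) = 4^-1 * x :> R by field.
  lra.
- apply: derivable_within_continuous => x _; exact: dF.
Qed.

Lemma hoeffding2 (h : R) : 0 <= h -> 1 - p + p * expR h <= expR (p * h + 8^-1 * h ^+ 2).
Proof.
move=> h0; have := F_le h h0.
change (ln (S h) - p * h - 8^-1 * (h ^+ 2) <= 0 -> S h <= expR (p * h + 8^-1 * h ^+ 2)).
move=> H; rewrite -[S h](lnK (S_gt0 h)) ler_expR; lra.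
Qed.

End Hoef.

Section Hoef2.
Variable R : realType.

Lemma exp_chord (t a b : R) : 0 <= t -> t <= 1 ->
  expR (t * a + (1 - t) * b) <= t * expR a + (1 - t) * expR b.
Proof.
move=> t0 t1.
have := @convex_expR R (Itv01 t0 t1) a b.
by rewrite !convRE.
Qed.

Lemma hoeffding n (w x : 'I_n -> R) (G eta : R) :
  (forall i, 0 <= w i) -> \sum_i w i = 1 -> 0 < G -> 0 <= eta ->
  (forall i, `|x i| <= G) ->
  \sum_i w i * expR (- eta * x i) <=
  expR (- eta * (\sum_i w i * x i) + eta ^+ 2 * G ^+ 2 / 2).
Proof.
move=> w0 w1 G0 eta0 xG.
pose t i := (G - x i) / (2 * G).
have G2 : 0 < 2 * G by rewrite mulr_gt0.
have t0 i : 0 <= t i.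
  rewrite /t divr_ge0 ?(ltW G2) // subr_ge0; have := xG i; rewrite ler_norml; lra.
have t1 i : t i <= 1.
  rewrite /t ler_pdivrMr // mul1r; have := xG i; rewrite ler_norml; lra.
have tE i : - eta * x i = t i * (eta * G) + (1 - t i) * (- (eta * G)).
  rewrite /t; field; lra.
have step1 : \sum_i w i * expR (- eta * x i) <=
    \sum_i w i * (t i * expR (eta * G) + (1 - t i) * expR (- (eta * G))).
  apply: ler_sum => i _; apply: ler_wpM2l => //; rewrite tE; exact: exp_chord.
pose P := \sum_i w i * t i.
have step2 : \sum_i w i * (t i * expR (eta * G) + (1 - t i) * expR (- (eta * G)))
    = P * expR (eta * G) + (1 - P) * expR (- (eta * G)).
  rewrite /P -[in 1 - _]w1 -sumrB mulr_suml mulr_suml -big_split /=.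
  by apply: eq_bigr => i _; ring.
have PE : P = (G - \sum_i w i * x i) / (2 * G).
  rewrite /P /t; under eq_bigr do rewrite mulrA.
  rewrite -mulr_suml; congr (_ / _).
  under eq_bigr do rewrite mulrBr.
  by rewrite sumrB -mulr_suml w1 mul1r.
have P0 : 0 <= P by rewrite /P sumr_ge0 // => i _; rewrite mulr_ge0.
have P1 : P <= 1.
  rewrite /P -w1; apply: ler_sum => i _; rewrite -[leRHS]mulr1; exact: ler_wpM2l.
have P01 : 0 <= P <= 1 by rewrite P0 P1.
have a0 : 0 <= 2 * (eta * G) by rewrite mulr_ge0 // mulr_ge0 // ltW.
have h2 := @hoeffding2 R P P01 _ a0.
apply: (le_trans step1); rewrite step2.
have -> : P * expR (eta * G) + (1 - P) * expR (- (eta * G)) =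
    expR (- (eta * G)) * (1 - P + P * expR (2 * (eta * G))).
  rewrite [2 * _]mulr_natl mulr2n expRD.
  have AB : expR (- (eta * G)) * expR (eta * G) = 1 by rewrite -expRD addNr expR0.
  set A := expR (eta * G); set B := expR (- (eta * G)).
  have -> : B * (1 - P + P * (A * A)) = B * (1 - P) + P * A * (B * A) by ring.
  by rewrite AB; ring.
apply: (le_trans (ler_wpM2l (expR_ge0 _) h2)); rewrite -expRD ler_expR.
rewrite PE le_eqVlt; apply/orP; left; apply/eqP; field; lra.
Qed.
End Hoef2.

Section Grad.
Variable R : realType.
Variable n : nat.

Lemma dir_le (f : 'rV[R]_n -> R) (x v : 'rV[R]_n) (c : R) :
  derivable f x v ->
  (forall h : R, 0 < h -> h <= 1 -> f (h *: v + x) <= f x + h * c) ->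
  'D_v f x <= c.
Proof.
move=> dv hc.
have cv := cvg_dnbhs_at_right dv.
apply: (cvgr_to_le cv).
near=> h.
have h0 : 0 < h by near: h; exact: nbhs_right_gt.
have h1 : h <= 1 by near: h; apply: nbhs_right_ltW; exact: ltr01.
rewrite /= -[leRHS](mulKf (lt0r_neq0 h0)) /GRing.scale /=.
rewrite ler_pM2l ?invr_gt0 //; rewrite lerBlDl; exact: hc.
Unshelve. all: by end_near. Qed.

Lemma derive_sum_delta (f : 'rV[R]_n -> R) (x v : 'rV[R]_n) :
  differentiable f x ->
  'D_v f x = \sum_j v ord0 j * 'D_(delta_mx ord0 j) f x.
Proof.
move=> df; rewrite deriveE // {1}(row_sum_delta v) linear_sum.
apply: eq_bigr => j _; rewrite linearZ /= deriveE //.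
Qed.
End Grad.

Section EG.
Variable R : realType.
Variable m : nat.
Variable g : nat -> 'I_m -> R.
Variable eta : R.

Definition Lc (t : nat) (i : 'I_m) : R := \sum_(1 <= s < t.+1) g s i.
Definition Z (t : nat) : R := \sum_i expR (- eta * Lc t i).
Definition wt (t : nat) (i : 'I_m) : R := expR (- eta * Lc t.-1 i) / Z t.-1.

Hypothesis m0 : (0 < m)%N.

Lemma Z_gt0 t : 0 < Z t.
Proof.
rewrite /Z (bigD1 (Ordinal m0)) //=; apply: ltr_pwDl; first exact: expR_gt0.
by apply: sumr_ge0 => i _; exact: expR_ge0.
Qed.

Lemma wt_ge0 t i : 0 <= wt t i.
Proof. by rewrite /wt divr_ge0 ?expR_ge0 // ltW // Z_gt0. Qed.

Lemma wt_sum1 t : \sum_i wt t i = 1.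
Proof. by rewrite /wt -mulr_suml divff // lt0r_neq0 // Z_gt0. Qed.

Lemma LcS t i : Lc t.+1 i = Lc t i + g t.+1 i.
Proof. by rewrite /Lc big_nat_recr. Qed.

Lemma Lc0 i : Lc 0 i = 0.
Proof. by rewrite /Lc big_geq. Qed.

Lemma Z0 : Z 0 = m%:R.
Proof.
rewrite /Z; under eq_bigr do rewrite Lc0 mulr0 expR0.
by rewrite sumr_const card_ord.
Qed.

Variable G : R.
Hypothesis G0 : 0 < G.
Hypothesis eta0 : 0 <= eta.

Lemma Z_step t : (forall i, `|g t.+1 i| <= G) ->
  Z t.+1 <= Z t * expR (- eta * (\sum_i wt t.+1 i * g t.+1 i) + eta ^+ 2 * G ^+ 2 / 2).
Proof.
move=> gG.
have -> : Z t.+1 = Z t * \sum_i wt t.+1 i * expR (- eta * g t.+1 i).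
  rewrite mulr_sumr /Z; apply: eq_bigr => i _.
  rewrite LcS /wt /= mulrA mulrCA divff ?lt0r_neq0 ?Z_gt0 // mulr1 -expRD; congr expR; ring.
apply: ler_wpM2l; first exact: ltW (Z_gt0 t).
apply: hoeffding => //; [exact: wt_ge0 | exact: wt_sum1].
Qed.

Lemma Z_bound T : (forall t i, (1 <= t <= T)%N -> `|g t i| <= G) ->
  Z T <= m%:R * expR (- eta * (\sum_(1 <= t < T.+1) \sum_i wt t i * g t i)
                      + T%:R * (eta ^+ 2 * G ^+ 2 / 2)).
Proof.
elim: T => [_|T IH gG].
  by rewrite big_geq // mulr0 mul0r addr0 expR0 mulr1 Z0.
have gT i : `|g T.+1 i| <= G by apply: gG; rewrite /= leqnn.
apply: (le_trans (Z_step T gT)).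
have IH' : Z T <= m%:R * expR (- eta * (\sum_(1 <= t < T.+1) \sum_i wt t i * g t i)
                      + T%:R * (eta ^+ 2 * G ^+ 2 / 2)).
  apply: IH => t i /andP[t1 tT]; apply: gG; rewrite t1 /=; exact: leqW.
apply: (le_trans (ler_wpM2r (expR_ge0 _) IH')).
rewrite -[_ * _ * expR _]mulrA -expRD (big_nat_recr T.+1) //= -natr1.
by rewrite le_eqVlt; apply/orP; left; apply/eqP; congr (_ * expR _); ring.
Qed.

Variable u : 'I_m -> R.
Hypothesis u0 : forall i, 0 <= u i.
Hypothesis u1 : \sum_i u i = 1.

Lemma eg_block T : (forall t i, (1 <= t <= T)%N -> `|g t i| <= G) ->
  eta * \sum_(1 <= t < T.+1) \sum_i (wt t i - u i) * g t i
    <= ln m%:R + T%:R * (eta ^+ 2 * G ^+ 2 / 2).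
Proof.
move=> gG.
have ZB := Z_bound T gG.
set A := \sum_(1 <= t < T.+1) \sum_i wt t i * g t i in ZB.
set B := \sum_(1 <= t < T.+1) \sum_i u i * g t i.
have BE : B = \sum_i u i * Lc T i.
  rewrite /B exchange_big /=; apply: eq_bigr => i _; rewrite /Lc mulr_sumr //.
have [j _ Hmin] := @arg_minP _ _ _ (Ordinal m0) xpredT (Lc T) isT.
have LB : Lc T j <= B.
  rewrite BE -[Lc T j]mul1r -u1 mulr_suml; apply: ler_sum => i _.
  by apply: ler_wpM2l => //; exact: Hmin.
have ZL : expR (- eta * Lc T j) <= Z T.
  rewrite /Z (bigD1 j) //= lerDl; apply: sumr_ge0 => i _; exact: expR_ge0.
have E1 : expR (- eta * B) <= m%:R * expR (- eta * A + T%:R * (eta ^+ 2 * G ^+ 2 / 2)).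
  apply: le_trans ZB; apply: le_trans ZL; rewrite ler_expR.
  by rewrite !mulNr lerN2 ler_wpM2l.
have mpos : 0 < m%:R :> R by rewrite ltr0n.
set X := - eta * A + T%:R * (eta ^+ 2 * G ^+ 2 / 2) in E1.
have e1 : ln (expR (- eta * B)) = - eta * B := expRK _.
have e2 : ln (m%:R * expR X) = ln m%:R + X.
  by rewrite lnM ?posrE ?expR_gt0 // expRK.
have : ln (expR (- eta * B)) <= ln (m%:R * expR X).
  have p1 : expR (- eta * B) \in Num.pos by rewrite posrE expR_gt0.
  have p2 : m%:R * expR X \in Num.pos by rewrite posrE mulr_gt0 // expR_gt0.
  by rewrite ler_ln.
rewrite e1 e2 /X.
have -> : \sum_(1 <= t < T.+1) \sum_i (wt t i - u i) * g t i = A - B.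
  rewrite /A /B -sumrB; apply: eq_bigr => t _; rewrite -sumrB.
  by apply: eq_bigr => i _; ring.
lra.
Qed.
End EG.

Arguments Lc {R m}.
Arguments wt {R m}.
Arguments Z {R m}.

Section Blocks.
Variable R : realType.
Variable K : nat.
Variable N : 'I_K -> nat.

Lemma sum_blocks (F : 'I_(dimN N) -> R) :
  \sum_j F j = \sum_k \sum_(i < N k) F (idx i).
Proof.
rewrite sig_big_dep /= (reindex (@tagnat.rank K N)) /=; last first.
  by exists (@tagnat.sig K N) => x _; [exact: tagnat.rankK | exact: tagnat.sigK].
apply: eq_bigr => -[k i] _ /=; by rewrite tagnat.rankE.
Qed.

Lemma weights_idx (eta : 'I_K -> R) (L : 'rV[R]_(dimN N)) k (i : 'I_(N k)) :
  eg_weights eta L ord0 (idx i) =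
  expR (- eta k * L ord0 (idx i)) / \sum_(i0 < N k) expR (- eta k * L ord0 (idx i0)).
Proof.
rewrite /eg_weights mxE /= /idx.
have := tagnat.Rank1K i.
move: (tagnat.sig1 _) => k' e.
by subst k'.
Qed.
End Blocks.

Lemma grad_ineq (R : realType) (n : nat) (f : 'rV[R]_n -> R) (x u : 'rV[R]_n) :
  differentiable f x ->
  (forall lam : R, 0 <= lam <= 1 -> f (lam *: u + (1 - lam) *: x) <= lam * f u + (1 - lam) * f x) ->
  f x - f u <= \sum_j (x ord0 j - u ord0 j) * 'D_(delta_mx ord0 j) f x.
Proof.
move=> df cv.
have dv : derivable f x (u - x) by apply: diff_derivable.
have := @dir_le R n f x (u - x) (f u - f x) dv.
rewrite derive_sum_delta // => H.
have : \sum_j (u - x) ord0 j * 'D_(delta_mx ord0 j) f x <= f u - f x.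
  apply: H => h h0 h1.
  have -> : h *: (u - x) + x = h *: u + (1 - h) *: x.
    by rewrite scalerBr scalerBl scale1r [x - _]addrC addrA.
  have := cv h; rewrite h1 ltW //= => /(_ isT) H2.
  apply: (le_trans H2); rewrite le_eqVlt; apply/orP; left; apply/eqP; ring.
have -> : \sum_j (x ord0 j - u ord0 j) * 'D_(delta_mx ord0 j) f x =
  - \sum_j (u - x) ord0 j * 'D_(delta_mx ord0 j) f x.
  rewrite -sumrN; apply: eq_bigr => j _; rewrite !mxE; ring.
move=> H3; lra.
Qed.

Theorem theorem1 (R : realType) (K : nat) (N : 'I_K -> nat) (T : nat)
  (l : nat -> 'rV[R]_(dimN N) -> R) (G : 'I_K -> R) :
  (1 <= K)%N ->
  (forall k, 1 <= N k)%N ->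
  (1 <= T)%N ->
  (forall t x, (1 <= t)%N -> in_simplex_prod x -> differentiable (l t) x) ->
  (forall t x y (lam : R), (1 <= t)%N -> in_simplex_prod x -> in_simplex_prod y ->
     0 <= lam <= 1 ->
     l t (lam *: x + (1 - lam) *: y) <= lam * l t x + (1 - lam) * l t y) ->
  (forall k, 0 < G k) ->
  (forall t x k (i : 'I_(N k)), (1 <= t <= T)%N -> in_simplex_prod x ->
     `|partial (l t) x (idx i)| <= G k) ->
  let eta := fun k => Num.sqrt (2 * ln (N k)%:R / T%:R) / G k in
  forall u, in_simplex_prod u ->
    \sum_(1 <= t < T.+1) l t (eg_output eta l t) - \sum_(1 <= t < T.+1) l t u
      <= Num.sqrt (2 * T%:R) * \sum_(k < K) G k * Num.sqrt (ln (N k)%:R).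
Proof.
move=> K1 N1 T1 ldiff lconv G0 lG eta u uS.
set x := fun t => eg_output eta l t.
have Zpos (L : 'rV[R]_(dimN N)) k : 0 < \sum_(i0 < N k) expR (- eta k * L ord0 (idx i0)).
  have m0 := N1 k.
  rewrite (bigD1 (Ordinal m0)) //=; apply: ltr_pwDl; first exact: expR_gt0.
  by apply: sumr_ge0 => i _; exact: expR_ge0.
have xS t : in_simplex_prod (x t).
  move=> k; split.
  - move=> i; rewrite /x /eg_output weights_idx divr_ge0 ?expR_ge0 //.
    exact: ltW (Zpos _ k).
  - rewrite /x /eg_output; under eq_bigr do rewrite weights_idx.
    by rewrite -mulr_suml divff // lt0r_neq0 // Zpos.
pose gr t j := partial (l t) (x t) j.
have gradI t : (1 <= t)%N -> l t (x t) - l t u <= \sum_j (x t ord0 j - u ord0 j) * gr t j.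
  move=> t1; apply: grad_ineq; first exact: ldiff.
  by move=> lam /andP[l0 l1]; apply: lconv => //; rewrite l0 l1.
pose gk k s (i : 'I_(N k)) := gr s (idx i).
have cumE t k i : cum_grad eta l t ord0 (idx i) = Lc (gk k) t i.
  elim: t => [|t IH]; first by rewrite Lc0 /= mxE.
  by rewrite /= mxE IH LcS mxE.
have xE t k i : x t ord0 (idx i) = wt (gk k) (eta k) t i.
  rewrite /x /eg_output weights_idx /wt /Z cumE; congr (_ / _).
  by apply: eq_bigr => i0 _; rewrite cumE.
rewrite -sumrB.
apply: (@le_trans _ _ (\sum_(1 <= t < T.+1) \sum_j (x t ord0 j - u ord0 j) * gr t j)).
  rewrite big_nat [X in _ <= X]big_nat; apply: ler_sum => t /andP[t1 _]; exact: gradI.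
have -> : \sum_(1 <= t < T.+1) \sum_j (x t ord0 j - u ord0 j) * gr t j =
  \sum_k \sum_(1 <= t < T.+1) \sum_(i < N k) (wt (gk k) (eta k) t i - u ord0 (idx i)) * gk k t i.
  under eq_bigr do rewrite sum_blocks.
  rewrite exchange_big /=; apply: eq_bigr => k _; apply: eq_bigr => t _.
  by apply: eq_bigr => i _; rewrite xE.
rewrite mulr_sumr; apply: ler_sum => k _.
have Gk := G0 k.
have rhs0 : 0 <= Num.sqrt (2 * T%:R) * (G k * Num.sqrt (ln (N k)%:R)).
  by rewrite mulr_ge0 ?sqrtr_ge0 // mulr_ge0 ?sqrtr_ge0 // ltW.
have [Nk1|Nk2] := leqP (N k) 1.
  pose i0 : 'I_(N k) := Ordinal (N1 k).
  have alli (i : 'I_(N k)) : i = i0.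
    apply: val_inj => /=; have := ltn_ord i; lia.
  have one (F : 'I_(N k) -> R) : \sum_i F i = F i0.
    rewrite (bigD1 i0) //= big_pred0 ?addr0 // => i; by rewrite (alli i) eqxx.
  apply: (le_trans _ rhs0); rewrite le_eqVlt; apply/orP; left; apply/eqP.
  apply: big1 => t _; rewrite one.
  have w1 : wt (gk k) (eta k) t i0 = 1 by rewrite -(one _) wt_sum1 // N1.
  have u1 : u ord0 (idx i0) = 1 by have [_ <-] := uS k; rewrite one.
  by rewrite w1 u1 subrr mul0r.
set a := ln (N k)%:R.
set Tr := T%:R : R.
have a0 : 0 < a by apply: ln_gt0; rewrite ltr1n.
have Tr0 : 0 < Tr by rewrite ltr0n.
set s := Num.sqrt (2 * a / Tr).
have s0 : 0 < s by rewrite sqrtr_gt0 divr_gt0 // mulr_gt0.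
have s2 : s ^+ 2 = 2 * a / Tr by rewrite sqr_sqrtr // ltW // divr_gt0 // mulr_gt0.
have etaE : eta k = s / G k by [].
have eta0 : 0 <= eta k by rewrite etaE divr_ge0 // ltW.
have B := @eg_block R (N k) (gk k) (eta k) (N1 k) (G k) Gk eta0
  (fun i => u ord0 (idx i)) (fun i => (uS k).1 i) (uS k).2 T.
have B' := B (fun t i ti => lG t (x t) k i ti (xS t)).
set S := \sum_(1 <= t < T.+1) _ in B' *.
have e1 : a = s ^+ 2 * Tr / 2 by rewrite s2; field; rewrite lt0r_neq0.
have e2 : eta k ^+ 2 * G k ^+ 2 = s ^+ 2 by rewrite etaE; field; rewrite lt0r_neq0.
rewrite e2 -/a {1}e1 in B'.
have H1 : s * (S / G k) <= s * (s * Tr).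
  have E : s * (s * Tr) = s ^+ 2 * Tr / 2 + Tr * (s ^+ 2 / 2) :> R by field.
  by rewrite mulrCA -etaE mulrC E.
have H2 : S <= s * Tr * G k by rewrite -ler_pdivrMr // -(ler_pM2l s0).
apply: (le_trans H2).
have -> : Num.sqrt (2 * Tr) * (G k * Num.sqrt a) = G k * Num.sqrt (2 * Tr * a).
  rewrite [Num.sqrt (2 * Tr * a)]sqrtrM; first by rewrite mulrCA.
  by rewrite mulr_ge0 // ltW.
have -> : 2 * Tr * a = (s * Tr) ^+ 2.
  by rewrite exprMn s2; field; rewrite lt0r_neq0.
rewrite sqrtr_sqr ger0_norm; last by rewrite mulr_ge0 // ltW.
by rewrite mulrC.
Qed.
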